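(* Let $k$ be a field, $V$ a $k$-vector space, $\varphi\in\operatorname{End}_k(V)$ a finite potent endomorphism with index $i(\varphi)=r$ and AST-decomposition $V=W_\varphi\oplus U_\varphi$. If $\psi\in\operatorname{End}_k(V)$ is a G-Drazin inverse of $\varphi$, then $W_\varphi$ and $U_\varphi$ are invariant under $\psi$.
   Context: An endomorphism $\varphi$ of a $k$-vector space $V$ is finite potent if $\varphi^n(V)$ is finite dimensional for some $n$. For such $\varphi$, the AST-decomposition is $V=U_\varphi\oplus W_\varphi$ where $U_\varphi=\{v\in V: \varphi^m(v)=0 \text{ for some } m\}$ and $W_\varphi=\{v\in V: p(\varphi)(v)=0 \text{ for some } p(x)\in k[x] \text{ coprime to } x\}$; both are $\varphi$-invariant, $\varphi|_{U_\varphi}$ is nilpotent, $W_\varphi$ is finite dimensional and $\varphi|_{W_\varphi}$ is an automorphism. The index $i(\varphi)$ is the nilpotency order of $\varphi|_{U_\varphi}$. An endomorphism $\psi\in\operatorname{End}_k(V)$ is a G-Drazin inverse of $\varphi$ if $\varphi\circ\psi\circ\varphi=\varphi$ and $\psi\circ\varphi^{r}=\varphi^{r}\circ\psi$, where $r=i(\varphi)$. *)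

(* Defs.v *)
From HB Require Import structures.
From mathcomp Require Import all_boot all_order all_algebra.
Set Implicit Arguments. Unset Strict Implicit. Unset Printing Implicit Defensive.
Import GRing.Theory.
Local Open Scope ring_scope.

Section FinitePotent.
Variables (K : fieldType) (V : lmodType K).

Definition fin_dim (S : V -> Prop) : Prop :=
  exists s : seq V, forall v, S v ->
    exists c : 'I_(size s) -> K, v = \sum_(i < size s) c i *: s`_i.

Definition finite_potent (phi : V -> V) : Prop :=
  exists n : nat, fin_dim (fun w => exists v, w = iter n phi v).

Definition poly_endo (p : {poly K}) (phi : V -> V) (v : V) : V :=
  \sum_(i < size p) p`_i *: iter i phi v.

Definition U_part (phi : V -> V) (v : V) : Prop :=
  exists m : nat, iter m phi v = 0.

Definition W_part (phi : V -> V) (v : V) : Prop :=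
  exists p : {poly K}, coprimep p 'X /\ poly_endo p phi v = 0.

Definition is_index (phi : V -> V) (r : nat) : Prop :=
  (forall u, U_part phi u -> iter r phi u = 0) /\
  (forall m, (forall u, U_part phi u -> iter m phi u = 0) -> (r <= m)%N).

Definition G_Drazin (phi psi : V -> V) (r : nat) : Prop :=
  (forall v, phi (psi (phi v)) = phi v) /\
  (forall v, psi (iter r phi v) = iter r phi (psi v)).

End FinitePotent.

(* Main.v *)
Require Import Defs.
From HB Require Import structures.
From mathcomp Require Import all_boot all_order all_algebra.
Import GRing.Theory.
Local Open Scope ring_scope.

Section Aux.
Variables (K : fieldType) (V : lmodType K) (phi : {linear V -> V}).

Lemma iterlD n x y : iter n phi (x + y) = iter n phi x + iter n phi y.
Proof. by elim: n => //= n IH; rewrite IH linearD. Qed.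
Lemma iterlZ n a x : iter n phi (a *: x) = a *: iter n phi x.
Proof. by elim: n => //= n IH; rewrite IH linearZ. Qed.
Lemma iterl0 n : iter n phi 0 = 0.
Proof. by elim: n => //= n IH; rewrite IH linear0. Qed.
Lemma iterl_sum n (I : Type) (r : seq I) (P : pred I) (F : I -> V) :
  iter n phi (\sum_(i <- r | P i) F i) = \sum_(i <- r | P i) iter n phi (F i).
Proof. exact: (big_morph _ (iterlD n) (iterl0 n)). Qed.
Lemma iter_comm m n x : iter m phi (iter n phi x) = iter n phi (iter m phi x).
Proof. by rewrite -!iterD addnC. Qed.
Lemma pe_comm n (p : {poly K}) v : iter n phi (poly_endo p phi v) = poly_endo p phi (iter n phi v).
Proof.
rewrite /poly_endo iterl_sum; apply: eq_bigr => i _.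
by rewrite iterlZ iter_comm.
Qed.
Lemma peD (p : {poly K}) x y : poly_endo p phi (x + y) = poly_endo p phi x + poly_endo p phi y.
Proof.
by rewrite /poly_endo -big_split; apply: eq_bigr => i _; rewrite iterlD scalerDr.
Qed.
Lemma pe0 (p : {poly K}) : poly_endo p phi 0 = 0.
Proof. by rewrite /poly_endo big1 // => i _; rewrite iterl0 scaler0. Qed.
Lemma peZ (p : {poly K}) a x : poly_endo p phi (a *: x) = a *: poly_endo p phi x.
Proof.
rewrite /poly_endo scaler_sumr; apply: eq_bigr => i _.
by rewrite iterlZ !scalerA mulrC.
Qed.
Lemma pe_sum (p : {poly K}) (I : Type) (r : seq I) (P : pred I) (F : I -> V) :
  poly_endo p phi (\sum_(i <- r | P i) F i) = \sum_(i <- r | P i) poly_endo p phi (F i).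
Proof. exact: (big_morph _ (peD p) (pe0 p)). Qed.

Lemma step (p : {poly K}) (w : V) : p`_0 != 0 -> poly_endo p phi w = 0 ->
  exists x, w = phi x /\ poly_endo p phi x = 0.
Proof.
move=> c0 H.
have pn0 : p != 0 by apply: contraNneq c0 => ->; rewrite coef0.
have sp : size p = (size p).-1.+1 by rewrite prednK // size_poly_gt0.
set n := (size p).-1 in sp.
set c := p`_0 in c0.
set S := \sum_(i < n) p`_i.+1 *: iter i phi w.
have H' : c *: w + phi S = 0.
  rewrite -H /poly_endo sp big_ord_recl /= linear_sum; congr (_ + _).
  by apply: eq_bigr => i _; rewrite linearZ.
exists (- c^-1 *: S); split.
  rewrite linearZ.
  have -> : phi S = - (c *: w) by apply/eqP; rewrite -addr_eq0 addrC H'.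
  change (w = (- c^-1) *: (- (c *: w))).
  by rewrite scaleNr scalerN opprK scalerA mulVf // scale1r.
rewrite peZ /S pe_sum big1 ?scaler0 // => i _.
by rewrite peZ -pe_comm H iterl0 scaler0.
Qed.

Lemma steps (p : {poly K}) : p`_0 != 0 -> forall n w, poly_endo p phi w = 0 ->
  exists x, w = iter n phi x.
Proof.
move=> c0; elim=> [|n IH] w H; first by exists w.
have [x1 [-> H1]] := step _ _ c0 H.
have [x2 ->] := IH _ H1.
by exists x2; rewrite -iterS iterSr.
Qed.
End Aux.
Arguments step {K V phi p w}.
Arguments steps {K V phi p}.

Theorem corollary3p3 (K : fieldType) (V : lmodType K)
    (phi psi : {linear V -> V}) (r : nat) :
  finite_potent phi ->
  is_index phi r ->
  G_Drazin phi psi r ->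
  (forall w, W_part phi w -> W_part phi (psi w)) /\
  (forall u, U_part phi u -> U_part phi (psi u)).
Proof.
move=> _ [Hr _] [G1 G2]; split.
  move=> w [p [cp H]].
  have c0 : p`_0 != 0.
    by rewrite -horner_coef0; move: cp; rewrite -[X in coprimep _ X]subr0 coprimep_XsubC.
  have [x1 [ex1 _]] := step c0 H.
  have [x ex] := steps c0 r w H.
  exists p; split => //.
  have phz : phi (psi w) = w by rewrite ex1 G1.
  have hz : psi w = iter r phi (psi x) by rewrite {1}ex G2.
  have HU : U_part phi (poly_endo p phi (psi x)).
    exists r.+1; rewrite pe_comm iterS -hz phz //.
  by rewrite hz -pe_comm Hr.
move=> u Hu; exists r; rewrite -G2 Hr // linear0 //.
Qed.
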